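(* Let $H$ be a finite group such that for any $g,x\in H$ there is a positive integer $n(x,g)$ with $[[g,{}_nx],g]=1$ for all $n\ge n(x,g)$. Then $H$ is nilpotent.
   Context: Commutators: $a^b=b^{-1}ab$, $[a,b]=a^{-1}b^{-1}ab$, and $[a,{}_nb]=[\dots[[a,b],b],\dots,b]$ with $b$ repeated $n$ times. *)

(* Defs.v *)
From mathcomp Require Import all_boot all_fingroup all_solvable.
Set Implicit Arguments. Unset Strict Implicit. Unset Printing Implicit Defensive.
Local Open Scope group_scope.

(* [a, _n b] = [...[[a,b],b],...,b] with b repeated n times; [a, _0 b] = a.
   MathComp's [~ x, y] is x^-1 * y^-1 * x * y, matching the paper. *)
Definition comm_iter (gT : finGroupType) (a b : gT) (n : nat) : gT :=
  iter n (fun c => [~ c, b]) a.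

(* Main.v *)
Require Import Defs.
From mathcomp Require Import all_boot all_fingroup all_solvable zify.
Set Implicit Arguments. Unset Strict Implicit. Unset Printing Implicit Defensive.
Local Open Scope group_scope.

Definition hypE (gT : finGroupType) (H : {set gT}) :=
  forall g x, g \in H -> x \in H ->
     exists2 m : nat, (0 < m)%N &
       forall n : nat, (m <= n)%N -> [~ comm_iter g x n, g] = 1.

Lemma coprime_comm1 (gT : finGroupType) (v x : gT) :
  commute x [~ v, x] -> coprime #[[~ v, x]] #[x] -> [~ v, x] = 1.
Proof.
move=> cx cop.
have := commgX #[x] cx; rewrite expg_order commg1 => /esym/eqP.
rewrite -order_dvdn => dv; apply/eqP; rewrite -order_eq1.
by rewrite -(gcdn_idPl dv).
Qed.

Lemma nil_iter (gT : finGroupType) (R : {group gT}) c w :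
  nilpotent R -> c \in R -> w \in R ->
  exists j, iter j (fun z => [~ z, w]) c = 1.
Proof.
move=> /lcnP[n Ln] cR wR.
have mem: forall j, iter j (fun z => [~ z, w]) c \in 'L_j.+1(R).
  elim=> [|j IH] //=; rewrite lcnSn; exact: mem_commg.
by exists n; have := mem n; rewrite Ln => /set1P.
Qed.

Lemma engel_cent (gT : finGroupType) (H R : {group gT}) a :
  hypE H -> a \in H -> R \subset H -> nilpotent R -> a \in 'N(R) ->
  coprime #|R| #[a] -> forall t, t \in R -> commute t a.
Proof.
move=> hyp aH sRH nilR aN cop t tR.
have NR : forall r y, r \in R -> y \in 'N(R) -> [~ r, y] \in R.
  by move=> r y rR yN; rewrite commgEl groupM ?groupV // memJ_norm.
have aR : forall r, r \in R -> [~ a, r] \in R.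
  by move=> r rR; rewrite -invg_comm groupV NR.
have copR : forall d, d \in R -> coprime #[d] #[a].
  by move=> d dR; apply: coprime_dvdl (order_dvdG dR) cop.
set w := [~ a, t]; have wR : w \in R by apply: aR.
set x := a ^ t.
have xE : x = a * w by rewrite /x conjg_mulR.
have xH : x \in H by rewrite groupJ // (subsetP sRH).
have xN : x \in 'N(R) by rewrite xE groupM // (subsetP (normG R)).
set c := comm_iter a x.
have cS : forall n, c n.+1 = [~ c n, x] by [].
have cR : forall n, c n.+1 \in R.
  elim=> [|n IH]; first by rewrite cS /= xE commgMJ commgg conj1g mulg1 aR.
  by rewrite cS NR.
have [m m0 hm] := hyp a x aH xH.
have cw : forall n, (m <= n)%N -> c n.+1 = [~ c n, w].
  move=> n mn; rewrite cS xE commgMJ.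
  by rewrite hm // conj1g mulg1.
have cj : forall j, c (j + m) = iter j (fun z => [~ z, w]) (c m).
  elim=> [|j IH] //=; rewrite -IH; exact: (cw _ (leq_addl _ _)).
have cmR : c m \in R by case: m m0 {hm cw cj} => // m _; apply: cR.
have [j cj1] := nil_iter nilR cmR wR.
have big1 : forall k, c (k + (j + m)) = 1.
  elim=> [|k IH]; first by rewrite add0n cj.
  by rewrite ?addSn cS IH comm1g.
have down : forall d i, (j + m <= i + d)%N -> c i.+1 = 1.
  elim=> [|d IH] i le.
    have -> : i.+1 = (i.+1 - (j + m)) + (j + m) by rewrite subnK // (leq_trans le) // addn0.
    by rewrite big1.
  have h2 : c i.+2 = 1 by apply: IH; rewrite addSn -addnS.
  rewrite cS; apply: coprime_comm1; last by rewrite /x orderJ; exact: copR (cR i).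
  by apply: commute_sym; apply/commgP; apply/eqP; exact: h2.
have c1 : c 1%N = 1 by apply: (down (j + m) 0%N); rewrite add0n.
have ca : commute a x by apply/commgP; apply/eqP; exact: c1.
have cwa : commute a w.
  have -> : w = a^-1 * x by rewrite xE mulKg.
  by apply: commuteM => //; apply: commuteV.
have : [~ t, a] = 1.
  apply: coprime_comm1; last by rewrite copR // -invg_comm groupV.
  by rewrite -invg_comm; apply: commuteV.
by move/eqP/commgP.
Qed.

Lemma arith1 (X m a l b : nat) : (m * a = X)%N -> (l * b = X)%N -> (1 < m)%N -> (1 < l)%N ->
  (0 < X)%N -> ((m - 1) * a + (l - 1) * b <= X - 1)%N -> False.
Proof. move=> e1 e2 hm hl hX h.
have ha : (2 * a <= X)%N by rewrite -e1 leq_mul2r hm orbT.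
have hb : (2 * b <= X)%N by rewrite -e2 leq_mul2r hl orbT.
have e3 : ((m - 1) * a = X - a)%N by rewrite mulnBl mul1n e1.
have e4 : ((l - 1) * b = X - b)%N by rewrite mulnBl mul1n e2.
rewrite e3 e4 in h. lia. Qed.

Lemma arith2 (X m a : nat) : (m * a = X)%N -> (0 < m)%N -> (1 < a)%N ->
  (X <= 1 + (m - 1) * a)%N -> False.
Proof. move=> e1 hm ha h.
have hX : (a <= X)%N by rewrite -e1 leq_pmull.
have e3 : ((m - 1) * a = X - a)%N by rewrite mulnBl mul1n e1.
rewrite e3 in h. lia. Qed.

Section SimpleCase.
Variables (gT : finGroupType) (H : {group gT}).
Hypothesis nilP : forall K : {group gT}, K \proper H -> nilpotent K.
Hypothesis simp : forall N : {group gT}, N <| H -> N :=: 1 \/ N :=: H.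

Lemma maxI_proper (M L : {group gT}) :
  maximal M H -> maximal L H -> M != L -> M :&: L \proper M.
Proof.
move=> maxM maxL neML; rewrite properEneq subsetIl andbT.
apply: contra neML => /eqP eI.
have sML : M \subset L by rewrite -eI subsetIr.
case/maxgroupP: maxM => _ mx; by apply/eqP/val_inj; rewrite /= (mx L (maxgroupp maxL) sML).
Qed.

Lemma maxI_aux k : forall M L : {group gT},
  (#|H| - #|M :&: L| < k)%N -> maximal M H -> maximal L H -> M != L ->
  (1 < #|M :&: L|)%N -> False.
Proof.
elim: k => // k IH M L lt maxM maxL neML ntI.
have pMH : M \proper H := maxgroupp maxM.
have pLH : L \proper H := maxgroupp maxL.
have sMH := proper_sub pMH; have sLH := proper_sub pLH.
set I := (M :&: L)%G.
have pIM : I \proper M by apply: maxI_proper.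
have pIL : I \proper L by rewrite /I /= setIC; apply: maxI_proper; rewrite // eq_sym.
have pNH : 'N_H(I) \proper H.
  rewrite properEneq subsetIl andbT; apply/negP => /eqP eN.
  have nsIH : I <| H.
    rewrite /normal (subset_trans (subsetIl _ _) sMH) /=.
    by rewrite -{1}eN subsetIr.
  case: (simp nsIH) => eI.
    by move: ntI; rewrite -/I /= eI cards1.
  by move: pIM; rewrite eI => /proper_sub sHM; move: pMH; rewrite properE sHM andbF.
have [K maxK sNK] := maxgroup_exists (pNH : (fun X : {group gT} => X \proper H) _).
have step : forall X : {group gT}, maximal X H -> K != X -> I \proper X -> False.
  move=> X maxX neKX pIX.
  have sXH := proper_sub (maxgroupp maxX).
  have nilX := nilP (maxgroupp maxX).
  have pIN := nilpotent_proper_norm nilX pIX.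
  have sNKX : 'N_X(I) \subset K :&: X.
    rewrite subsetI subsetIl andbT; apply: subset_trans sNK.
    by rewrite setSI.
  have lt1 := proper_card pIN.
  have le2 := subset_leq_card sNKX.
  have le3 : (#|K :&: X| <= #|H|)%N.
    by apply: subset_leq_card; apply: subset_trans (subsetIr _ _) sXH.
  have lt4 : (#|I| < #|K :&: X|)%N := leq_trans lt1 le2.
  have g1 : (#|H| - #|K :&: X| < k)%N.
    have lt' : (#|H| - #|I| <= k)%N by exact: lt.
    apply: leq_trans lt'; rewrite ltn_sub2lE //.
  have g2 : (1 < #|K :&: X|)%N by apply: leq_trans ntI (ltnW lt4).
  exact: (IH K X g1 maxK maxX neKX g2).
case: (eqVneq K M) => [eKM | neKM]; last exact: step M maxM neKM pIM.
apply: (step L maxL) => //; by rewrite eKM.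
Qed.

Lemma maxI (M L : {group gT}) x :
  maximal M H -> maximal L H -> M != L -> x \in M -> x \in L -> x = 1.
Proof.
move=> maxM maxL neML xM xL; apply/eqP; apply: contraT => nx; exfalso.
apply: (@maxI_aux (#|H| - #|M :&: L|).+1 M L) => //.
rewrite (cardG_gt1 (M :&: L)%G); apply/trivgPn; exists x => //.
by rewrite inE xM.
Qed.

Lemma selfnorm (M : {group gT}) g :
  maximal M H -> M :!=: 1 -> g \in H -> M :^ g = M -> g \in M.
Proof.
move=> maxM ntM gH eMg.
have pMH : M \proper H := maxgroupp maxM.
have sMH := proper_sub pMH.
have sN : M \subset 'N_H(M) by rewrite subsetI sMH normG.
have gN : g \in 'N_H(M) by rewrite inE gH; apply/normP.
case: (boolP ('N_H(M) \proper H)) => [pN | npN].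
  case/maxgroupP: maxM => _ mx.
  by rewrite -(mx ('N_H(M))%G pN sN).
have eN : 'N_H(M) = H.
  apply/eqP; move: npN; rewrite properEneq subsetIl andbT; exact: negbNE.
have nsMH : M <| H by rewrite /normal sMH -{1}eN subsetIr.
case: (simp nsMH) => eM; first by move: ntM; rewrite eM eqxx.
by move: pMH; rewrite eM properxx.
Qed.

Hypothesis ncyc : forall h, h \in H -> <[h]> \proper H.
Hypothesis ntH : H :!=: 1.

Lemma maxTI (M : {group gT}) : maximal M H -> M :!=: 1 -> normedTI M^# H M.
Proof.
move=> maxM ntM.
have pMH : M \proper H := maxgroupp maxM.
have sMH := proper_sub pMH.
apply/normedTI_P; split.
- have [x xM nx] := trivgPn _ ntM.
  by apply/set0Pn; exists x; rewrite !inE nx.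
- by rewrite subsetI sMH normD1 normG.
move=> g gH; rewrite -setI_eq0 => /set0Pn [x].
rewrite conjD1g !inE => /andP [/andP [nx xM] /andP [_ xMg]].
apply: selfnorm => //.
have maxMg : maximal (M :^ g)%G H by rewrite -(conjGid gH) maximalJ.
case: (eqVneq (M :^ g)%G M) => [e | ne]; first by have := congr1 val e.
by move: nx; rewrite (maxI maxMg maxM ne xMg xM) eqxx.
Qed.

Lemma cs_card (M : {group gT}) : maximal M H -> M :!=: 1 ->
  #|class_support M^# H| = (#|M^#| * #|H : M|)%N.
Proof. by move=> maxM ntM; apply: card_support_normedTI (maxTI maxM ntM). Qed.


Lemma csH (A : {group gT}) : A \subset H -> class_support A^# H \subset H.
Proof. move=> sAH; apply: class_support_subG; exact: subset_trans (subsetDl _ _) sAH. Qed.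

Lemma cs1 (A : {group gT}) z : z \in class_support A^# H -> z != 1.
Proof.
by case/imset2P => u y uA _ ->; rewrite conjg_eq1; move: uA; rewrite !inE => /andP[].
Qed.

Lemma cardD1g (A : {group gT}) : #|A^#| = (#|A| - 1)%N.
Proof. by rewrite (cardsD1 1 A) group1 add1n subSS subn0. Qed.

Lemma simple_contra : False.
Proof.
have [h hH nh] := trivgPn _ ntH.
have [M maxM shM] := maxgroup_exists (ncyc hH : (fun X : {group gT} => X \proper H) _).
have hM : h \in M by rewrite (subsetP shM) ?cycle_id.
have ntM : M :!=: 1 by apply/trivgPn; exists h.
have pMH : M \proper H := maxgroupp maxM.
have sMH := proper_sub pMH.
set csM := class_support M^# H.
have cM : #|csM| = ((#|M| - 1) * #|H : M|)%N by rewrite cs_card // cardD1g.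
have LM := Lagrange sMH.
have aM : (1 < #|H : M|)%N by rewrite indexg_gt1; case/andP: pMH.
have mM : (1 < #|M|)%N by rewrite cardG_gt1.
have : ~~ (H \subset 1 |: csM).
  apply/negP => /subset_leq_card; rewrite cardsU1 cM => le.
  apply: (arith2 LM (ltnW mM) aM); apply: leq_trans le _.
  by rewrite leq_add2r leq_b1.
case/subsetPn => h' h'H; rewrite !inE negb_or => /andP [nh' h'cs].
have [L maxL shL] := maxgroup_exists (ncyc h'H : (fun X : {group gT} => X \proper H) _).
have h'L : h' \in L by rewrite (subsetP shL) ?cycle_id.
have ntL : L :!=: 1 by apply/trivgPn; exists h'.
have pLH : L \proper H := maxgroupp maxL.
have sLH := proper_sub pLH.
set csL := class_support L^# H.
have cL : #|csL| = ((#|L| - 1) * #|H : L|)%N by rewrite cs_card // cardD1g.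
have LL := Lagrange sLH.
have mL : (1 < #|L|)%N by rewrite cardG_gt1.
have disj : csM :&: csL = set0.
  apply/eqP/set0Pn => [[z /setIP [zM zL]]].
  have nz := cs1 zM.
  case/imset2P: zM => u g uM gH ez.
  case/imset2P: zL => v k vL kH ez'.
  move: uM vL; rewrite !inE => /andP [_ uM] /andP [_ vL].
  have zMg : z \in M :^ g by rewrite ez memJ_conjg.
  have zLk : z \in L :^ k by rewrite ez' memJ_conjg.
  have maxMg : maximal (M :^ g)%G H by rewrite -(conjGid gH) maximalJ.
  have maxLk : maximal (L :^ k)%G H by rewrite -(conjGid kH) maximalJ.
  case: (eqVneq (M :^ g)%G (L :^ k)%G) => [e | ne]; last first.
    by move: nz; rewrite (maxI maxMg maxLk ne zMg zLk) eqxx.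
  have eL : L :=: M :^ (g * k^-1).
    have e' := congr1 val e; simpl in e'.
    by rewrite conjsgM e' conjsgK.
  have gk : g * k^-1 \in H by rewrite groupM ?groupV.
  move: h'cs; rewrite /csM -(class_supportGidl _ gk) conjD1g -eL.
  by rewrite mem_class_support // !inE nh'.
have sU : csM :|: csL \subset H :\ 1.
  apply/subsetP => z; rewrite inE => /orP [] zc; rewrite !inE.
    by rewrite (cs1 zc) (subsetP (csH sMH)).
  by rewrite (cs1 zc) (subsetP (csH sLH)).
have := subset_leq_card sU.
have := cardsUI csM csL; rewrite disj cards0 addn0 => ->.
have cH : #|H :\ 1| = (#|H| - 1)%N.
  by rewrite [in RHS](cardsD1 1 H) group1 add1n subSS subn0.
rewrite cH cM cL => le.
exact: (arith1 LM LL mM mL (cardG_gt0 H) le).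
Qed.

End SimpleCase.

Lemma sol_ind n : forall (gT : finGroupType) (H : {group gT}), (#|H| < n)%N ->
  (forall K : {group gT}, K \proper H -> nilpotent K) -> solvable H.
Proof.
elim: n => // n IH gT H leH nilP.
case: (boolP [exists N : {group gT}, [&& N <| H, N :!=: 1 & N :!=: H]]).
  case/existsP => N /and3P [nsNH ntN neNH].
  have sNH := normal_sub nsNH.
  have pNH : N \proper H by rewrite properEneq neNH.
  rewrite (series_sol nsNH) (nilpotent_sol (nilP N pNH)) /=.
  apply: IH.
    rewrite card_quotient ?normal_norm //.
    have LN := Lagrange sNH.
    have gt1 : (1 < #|N|)%N by rewrite cardG_gt1.
    have lt : (#|H : N| < #|H|)%N by rewrite -LN ltn_Pmull // indexg_gt0.
    by rewrite -ltnS; apply: leq_trans leH; rewrite ltnS.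
  move=> Kb pKb.
  case/inv_quotientS: (proper_sub pKb) => // K defK sNK sKH.
  rewrite defK quotient_nil // nilP //.
  rewrite properEneq sKH andbT; apply: contraTneq pKb => eKH.
  by rewrite defK eKH properxx.
move/existsPn => nex.
have simp : forall N : {group gT}, N <| H -> N :=: 1 \/ N :=: H.
  move=> N nsNH; have := nex N; rewrite nsNH /= negb_and !negbK.
  by case/orP => /eqP ->; [left | right].
case: (boolP (abelian H)) => [/abelian_sol // | nab].
exfalso.
have ntH : H :!=: 1 by apply: contraNneq nab => ->; apply: abelian1.
have ncyc : forall h, h \in H -> <[h]> \proper H.
  move=> h hH; rewrite properEneq cycle_subG hH andbT.
  by apply: contraNneq nab => <-; apply: cycle_abelian.
exact: (simple_contra nilP simp ncyc ntH).
Qed.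

Lemma minnil_sol (gT : finGroupType) (H : {group gT}) :
  (forall K : {group gT}, K \proper H -> nilpotent K) -> solvable H.
Proof. exact: (@sol_ind #|H|.+1). Qed.

Lemma main_ind (gT : finGroupType) n (H : {group gT}) :
  (#|H| < n)%N -> hypE H -> nilpotent H.
Proof.
elim: n H => // n IH H leH hyp.
have propnil : forall K : {group gT}, K \proper H -> nilpotent K.
  move=> K pKH; apply: IH; first exact: leq_trans (proper_card pKH) leH.
  move=> g x gK xK; apply: hyp; exact: (subsetP (proper_sub pKH)).
have solH := minnil_sol propnil.
have [H1 | ntH] := eqVneq (H :> {set gT}) 1.
  by rewrite H1 nilpotent1.
have [M nsMH primeq] := sol_prime_factor_exists solH ntH.
set q := #|H : M| in primeq.
have sMH : M \subset H := normal_sub nsMH.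
have nMH : H \subset 'N(M) := normal_norm nsMH.
have pMH : M \proper H.
  rewrite properEneq sMH andbT; apply: contraTneq primeq => eMH.
  by rewrite /q eMH indexgg.
have nilM := propnil M pMH.
have [_ [h hH hM]] := properP pMH.
set s := h.`_q; set y := h.`_q^'.
have sH : s \in H by rewrite (subsetP _ _ (cycle_constt _ _)) // cycle_subG.
have yH : y \in H by rewrite (subsetP _ _ (cycle_constt _ _)) // cycle_subG.
have yM : y \in M.
  have yN : y \in 'N(M) := subsetP nMH y yH.
  apply: coset_idr => //; apply/eqP; rewrite -order_eq1.
  have d1 : (#[coset M y] %| #[y])%N by apply: morph_order.
  have d2 : (#[coset M y] %| q)%N.
    by rewrite /q -card_quotient // order_dvdG // mem_quotient.
  have cop : coprime #[y] q.
    by apply: (p'nat_coprime (p_elt_constt _ _)); apply: pnat_id.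
  by rewrite -dvdn1 -(eqnP cop) dvdn_gcd d1 d2.
have sM : s \notin M.
  apply: contra hM => sM; by rewrite -(consttC q h) groupM.
have qs : q.-elt s := p_elt_constt _ _.
set R := 'O_q^'(M)%G; set Q1 := 'O_q(M)%G.
have dp : Q1 \x R = M := nilpotent_pcoreC q nilM.
have [_ eM cRQ1 _] := dprodP dp.
have nsRH : R <| H := char_normal_trans (pcore_char _ _) nsMH.
have nsQ1H : Q1 <| H := char_normal_trans (pcore_char _ _) nsMH.
have sN : s \in 'N(R) := subsetP (normal_norm nsRH) s sH.
have nilR : nilpotent R := nilpotentS (pcore_sub _ _) nilM.
have cop : coprime #|R| #[s] := p'nat_coprime (pcore_pgroup _ _) qs.
have cRs := engel_cent hyp sH (normal_sub nsRH) nilR sN cop.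
have sC : s \in 'C(R).
  apply/centP => t tR; apply: commute_sym; exact: cRs.
set Q0 := (Q1 <*> <[s]>)%G.
have cQ0 : Q0 \subset 'C(R).
  by rewrite join_subG cycle_subG sC andbT centsC.
have qQ0 : q.-group Q0.
  rewrite /Q0 /= norm_joinEr; last by rewrite cycle_subG (subsetP (normal_norm nsQ1H)).
  by rewrite pgroupM pcore_pgroup.
set K2 := (R <*> Q0)%G.
have sK2H : K2 \subset H.
  rewrite join_subG normal_sub //= join_subG normal_sub //=.
  by rewrite cycle_subG.
have sMK2 : M \subset K2.
  rewrite -eM mul_subG //= ?joing_subl //.
  by apply: subset_trans (joing_subr _ _); rewrite joing_subl.
have sK2 : s \in K2.
  by rewrite (subsetP (joing_subr _ _)) // (subsetP (joing_subr _ _)) // cycle_id.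
have K2H : K2 :=: H.
  apply/eqP; rewrite eqEsubset sK2H /= -indexg_eq1.
  have li := Lagrange_index sK2H sMK2.
  have nt : #|K2 : M| != 1%N.
    by rewrite indexg_eq1; apply: contra sM => /subsetP; apply.
  have : (#|H : K2| %| q)%N by rewrite /q -li dvdn_mulr.
  case/primeP: primeq => q1 /(_ _ _) dq /dq /orP [] // /eqP e.
  move: li; rewrite e -/q => li.
  have q0 : (0 < q)%N by apply: ltnW.
  by move: nt; rewrite -(eqn_pmul2l q0) li muln1 eqxx.
rewrite -K2H /= cent_joinEr // mulg_nil // nilR /=.
exact: pgroup_nil qQ0.
Qed.

Unset Implicit Arguments.

Theorem lemma5p2 (gT : finGroupType) (H : {group gT}) :
  (forall g x, g \in H -> x \in H ->
     exists2 m : nat, (0 < m)%N &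
       forall n : nat, (m <= n)%N -> [~ comm_iter g x n, g] = 1) ->
  nilpotent H.
Proof.
move=> hyp; exact: (@main_ind gT #|H|.+1 H (ltnSn _) hyp).
Qed.
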